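(* Let $a\in[0,\infty)$ and let $t:[0,1]\to[0,\infty]$ and $s:[0,\infty]\to[0,1]$ be continuous and increasing functions such that $G_{t,s}(x,y)=s(t(x)+t(y))$ defines a grouping function $G_{t,s}:[0,1]^2\to[0,1]$. Suppose $t(x)=\frac{a}{2}$ if and only if $x=0$. Then the following are equivalent: (1) $G_{t,s}$ is a t-conorm; (2) $0$ is a neutral element of $G_{t,s}$; (3) $s(t(x)+\frac{a}{2})=x$ for all $x\in[0,1]$.
   Context: ''Increasing'' means non-decreasing. Arithmetic in $[0,\infty]$ uses $c+\infty=\infty$; continuity on $[0,\infty]$ refers to the usual topology of the extended half-line. A grouping function is a map $G:[0,1]^2\to[0,1]$ that is (G1) commutative, (G2) $G(x,y)=0$ iff $x=y=0$, (G3) $G(x,y)=1$ iff $x=1$ or $y=1$, (G4) increasing in each variable, (G5) continuous. A t-conorm is a commutative, associative map $S:[0,1]^2\to[0,1]$, increasing in each variable, with $S(x,0)=x$ for all $x$. *)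

(* Defs.v *)
From HB Require Import structures.
From mathcomp Require Import all_boot all_order all_algebra.
From mathcomp Require Import all_classical all_reals all_analysis.
Set Implicit Arguments. Unset Strict Implicit. Unset Printing Implicit Defensive.
Import Order.TTheory GRing.Theory Num.Theory.
Local Open Scope ring_scope.
Import numFieldNormedType.Exports.
Local Open Scope classical_set_scope.

Section Defs.
Variable R : realType.

Definition I01 : set R := [set x | 0 <= x <= 1].

Definition Ipos : set (\bar R) := [set x | (0 <= x)%E].

Definition grouping (G : R -> R -> R) : Prop :=
  (forall x y, I01 x -> I01 y -> I01 (G x y)) /\
  (forall x y, I01 x -> I01 y -> G x y = G y x) /\
  (forall x y, I01 x -> I01 y -> (G x y = 0 <-> (x = 0 /\ y = 0))) /\
  (forall x y, I01 x -> I01 y -> (G x y = 1 <-> (x = 1 \/ y = 1))) /\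
  (forall x y z, I01 x -> I01 y -> I01 z -> y <= z ->
      G x y <= G x z /\ G y x <= G z x) /\
  {within [set p : R * R | I01 p.1 /\ I01 p.2],
     continuous (fun p : R * R => G p.1 p.2)}.

Definition tconorm (S : R -> R -> R) : Prop :=
  (forall x y, I01 x -> I01 y -> I01 (S x y)) /\
  (forall x y, I01 x -> I01 y -> S x y = S y x) /\
  (forall x y z, I01 x -> I01 y -> I01 z -> S x (S y z) = S (S x y) z) /\
  (forall x y z, I01 x -> I01 y -> I01 z -> y <= z ->
      S x y <= S x z /\ S y x <= S z x) /\
  (forall x, I01 x -> S x 0 = x).

Definition neutral_elt (G : R -> R -> R) (e : R) : Prop :=
  forall x, I01 x -> G x e = x /\ G e x = x.

Definition Gts (t : R -> \bar R) (s : \bar R -> R) : R -> R -> R :=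
  fun x y => s (t x + t y)%E.

End Defs.
Arguments I01 {R}.
Arguments Ipos {R}.

(* Main.v *)
Require Import Defs.
From HB Require Import structures.
From mathcomp Require Import all_boot all_order all_algebra.
From mathcomp Require Import all_classical all_reals all_analysis.
From mathcomp Require Import ring lra.
Import Order.TTheory GRing.Theory Num.Theory.
Local Open Scope ring_scope.
Import numFieldNormedType.Exports.
Local Open Scope classical_set_scope.

Lemma side_right (R : realType) (w : R) (P : R -> Prop) :
  nbhs w P -> 0 <= w -> w < 1 -> exists x, w < x /\ x <= 1 /\ P x.
Proof.
move=> /nbhs_ballP [e /= e0 he] w0 w1.
pose d := Num.min (e / 2) ((1 - w) / 2).
have d1 : d <= e / 2 by rewrite /d ge_min lexx.
have d2 : d <= (1 - w) / 2 by rewrite /d ge_min lexx orbT.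
have d0 : 0 < d by rewrite /d lt_min; apply/andP; split; lra.
exists (w + d); split; first lra; split; first lra.
apply: he; rewrite -ball_normE /=.
have -> : w - (w + d) = - d by ring.
rewrite normrN ger0_norm; lra.
Qed.

Lemma side_left (R : realType) (w : R) (P : R -> Prop) :
  nbhs w P -> 0 < w -> exists x, 0 <= x /\ x < w /\ P x.
Proof.
move=> /nbhs_ballP [e /= e0 he] w0.
pose d := Num.min (e / 2) (w / 2).
have d1 : d <= e / 2 by rewrite /d ge_min lexx.
have d2 : d <= w / 2 by rewrite /d ge_min lexx orbT.
have d0 : 0 < d by rewrite /d lt_min; apply/andP; split; lra.
exists (w - d); split; first lra; split; first lra.
apply: he; rewrite -ball_normE /=.
have -> : w - (w - d) = d by ring.
rewrite ger0_norm; lra.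
Qed.

Lemma cont_pt (R : realType) (t : R -> \bar R) (A : set R) (w : R)
  (O : set (\bar R)) :
  {within A, continuous t} -> A w -> open O -> O (t w) ->
  nbhs w (fun x => A x -> O (t x)).
Proof.
move=> /subspace_continuousP tc Aw oO Ot.
have := tc w Aw O.
have : nbhs (t w) O by apply: open_nbhs_nbhs; split.
move=> h /(_ h).
done.
Qed.

Theorem theorem6p3 (R : realType) (a : R) (t : R -> \bar R) (s : \bar R -> R) :
  0 <= a ->
  (forall x, I01 x -> Ipos (t x)) ->
  {within I01, continuous t} ->
  (forall x y, I01 x -> I01 y -> x <= y -> (t x <= t y)%E) ->
  (forall u, Ipos u -> I01 (s u)) ->
  {within Ipos, continuous s} ->
  (forall u v, Ipos u -> Ipos v -> (u <= v)%E -> s u <= s v) ->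
  grouping (Gts t s) ->
  (forall x, I01 x -> (t x = (a / 2)%:E <-> x = 0)) ->
  (tconorm (Gts t s) <-> neutral_elt (Gts t s) 0) /\
  (neutral_elt (Gts t s) 0 <->
     (forall x, I01 x -> s (t x + (a / 2)%:E)%E = x)).
Proof.
move=> a0 tpos tcont tmono spos scont smono Gg t0iff.
have I0 : I01 (0 : R) by rewrite /I01 /= lexx ler01.
have I1 : I01 (1 : R) by rewrite /I01 /= lexx ler01.
have t0 : t 0 = (a / 2)%:E by apply/(t0iff 0 I0).
have NH : neutral_elt (Gts t s) 0 <->
     (forall x, I01 x -> s (t x + (a / 2)%:E)%E = x).
  split.
  - by move=> N x Ix; have [+ _] := N x Ix; rewrite /Gts t0.
  - move=> H x Ix; rewrite /Gts t0; split; first exact: H.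
    by rewrite addeC; exact: H.
split => //; split.
- move=> [_ [comm [_ [_ id]]]] x Ix; split; first exact: id.
  by rewrite comm //; exact: id.
move=> N; have H3 := NH.1 N.
have fa2 : (a / 2)%:E \is a fin_num by [].
have tge : forall x, I01 x -> ((a / 2)%:E <= t x)%E.
  by move=> x Ix; rewrite -t0; apply: tmono => //; case/andP: Ix.
have K : forall u, Ipos u -> (a%:E <= u)%E -> s u < 1 ->
    (t (s u) + (a / 2)%:E = u)%E.
  move=> u Iu au su1.
  have Iw := spos u Iu.
  have Iw' := Iw; case/andP: Iw' => w0 w1.
  case: (ltgtP (t (s u) + (a / 2)%:E) u) => // [lt|gt].
  - have O : `]-oo, (u - (a / 2)%:E)%E[%classic (t (s u)).
      by rewrite /= in_itv /= EFinN lteBrDr.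
    have := @cont_pt _ t _ _ _ tcont Iw (@lray_open _ (\bar R) _) O.
    move=> /(@side_right _ _ _) /(_ w0 su1) [x [wx [x1 Px]]].
    have Ix : I01 x by rewrite /I01 /= x1 andbT; apply: le_trans (ltW wx).
    have := Px Ix; rewrite /= in_itv /= EFinN lteBrDr // => lx.
    have : x <= s u.
      rewrite -{1}(H3 x Ix); apply: smono => //; last exact: ltW.
      by rewrite /Ipos /=; apply: adde_ge0; [exact: tpos|rewrite lee_fin; lra].
    by rewrite leNgt wx.
  - have wn0 : s u != 0.
      apply/eqP => w0'; move: gt; rewrite w0' t0 -EFinD.
      have -> : a / 2 + a / 2 = a by field.
      by rewrite ltNge au.
    have wp : 0 < s u by rewrite lt_neqAle eq_sym wn0 w0.
    have O : `](u - (a / 2)%:E)%E, +oo[%classic (t (s u)).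
      by rewrite /= in_itv /= andbT EFinN lteBlDr.
    have := @cont_pt _ t _ _ _ tcont Iw (@rray_open _ (\bar R) _) O.
    move=> /(@side_left _ _ _) /(_ wp) [x [x0 [xw Px]]].
    have Ix : I01 x by rewrite /I01 /= x0 /=; apply: le_trans (ltW xw) w1.
    have := Px Ix; rewrite /= in_itv /= andbT EFinN lteBlDr // => lx.
    have : s u <= x.
      rewrite -{1}(H3 x Ix); apply: smono => //; last exact: ltW.
      by rewrite /Ipos /=; apply: adde_ge0; [exact: tpos|rewrite lee_fin; lra].
    by rewrite leNgt xw.
have L : forall x y z, I01 x -> I01 y -> I01 z ->
    Gts t s x (Gts t s y z) = s (t x + (t y + t z) - (a / 2)%:E)%E.
  move=> x y z Ix Iy Iz.
  set u := (t y + t z)%E.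
  have Iu : Ipos u by rewrite /Ipos /=; apply: adde_ge0; [exact: tpos|exact: tpos].
  have au : (a%:E <= u)%E.
    have -> : a = a / 2 + a / 2 by field.
    by rewrite EFinD; apply: leeD; exact: tge.
  rewrite /Gts -/u.
  have := spos u Iu; case/andP => _; rewrite le_eqVlt => /orP[/eqP su1|su1].
  - have -> : s (t x + t (s u))%E = 1.
      have := (Gg.2.2.2.1 x (s u) Ix (spos u Iu)).2.
      by rewrite /Gts su1; apply; right.
    apply/eqP; rewrite eq_le; apply/andP; split.
    + have Vu : (u <= t x + u - (a / 2)%:E)%E.
        by rewrite leeBrDr // addeC; apply: leeD2r; exact: tge.
      apply: (le_trans (_ : 1 <= s u)); first by rewrite su1.
      apply: smono => //; exact: (le_trans Iu Vu).
    + have Vu : (u <= t x + u - (a / 2)%:E)%E.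
        by rewrite leeBrDr // addeC; apply: leeD2r; exact: tge.
      have : I01 (s (t x + u - (a / 2)%:E)%E).
        by apply: spos; exact: (le_trans Iu Vu).
      by case/andP.
  - have := K u Iu au su1 => e.
    have -> : t (s u) = (u - (a / 2)%:E)%E by rewrite -[in RHS]e addeK.
    by rewrite addeA.
have IG : forall x y, I01 x -> I01 y -> I01 (Gts t s x y) := Gg.1.
have comm : forall x y, I01 x -> I01 y -> Gts t s x y = Gts t s y x := Gg.2.1.
split => //; split => //; split.
- move=> x y z Ix Iy Iz.
  rewrite (L x y z Ix Iy Iz) (comm (Gts t s x y) z); last 2 first; [exact: IG | done |]; rewrite (L z x y Iz Ix Iy).
  by congr s; congr (_ - _)%E; rewrite [(t z + _)%E]addeC -addeA.
split; first exact: Gg.2.2.2.2.1.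
by move=> x Ix; have [] := N x Ix.
Qed.
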